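(* Let $\iota:\emptyset\to\{\bullet\}$. Then, in $\mathrm{Top}$, $\{\iota\}^{lrr}$ is the class of continuous maps admitting a continuous section.
   Context: For continuous maps $f:A\to B$, $g:C\to D$, $f\pitchfork g$ means: for all continuous $t:A\to C$, $b:B\to D$ with $g\circ t=b\circ f$ there is continuous $d:B\to C$ with $d\circ f=t$, $g\circ d=b$. For a class $P$, $P^l=\{f: f\pitchfork g\ \forall g\in P\}$, $P^r=\{g: f\pitchfork g\ \forall f\in P\}$, and $P^{lrr}=((P^l)^r)^r$. *)

(* Defs.v *)
From mathcomp Require Import all_boot all_classical topology.

Set Implicit Arguments.
Unset Strict Implicit.
Unset Printing Implicit Defensive.

Record arr := Arr {
  dom : topologicalType;
  cod : topologicalType;
  fn : dom -> cod;
  fn_cont : continuous fn }.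
Arguments fn : clear implicits.
Arguments dom : clear implicits.
Arguments cod : clear implicits.

Definition mclass := arr -> Prop.

Definition lifts (f g : arr) : Prop :=
  forall (t : dom f -> dom g) (b : cod f -> cod g),
    continuous t -> continuous b ->
    fn g \o t = b \o fn f ->
    exists d : cod f -> dom g,
      continuous d /\ d \o fn f = t /\ fn g \o d = b.

Definition lorth (P : mclass) : mclass := fun f => forall g, P g -> lifts f g.
Definition rorth (P : mclass) : mclass := fun g => forall f, P f -> lifts f g.

Definition lrr (P : mclass) : mclass := rorth (rorth (lorth P)).

Definition empty_space : topologicalType := discrete_topology void.
Definition point_space : topologicalType := discrete_topology unit.

Definition iota_fun : empty_space -> point_space := fun x => of_void unit x.

Lemma iota_cont : continuous iota_fun.
Proof. by move=> x; case: x. Qed.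

Definition iota_arr : arr := @Arr empty_space point_space iota_fun iota_cont.

Definition single (h : arr) : mclass := fun g => g = h.

Definition has_cont_section (g : arr) : Prop :=
  exists s : cod g -> dom g, continuous s /\ fn g \o s = id.

(* Main.v *)
Require Import Defs.
From mathcomp Require Import all_boot all_classical topology.

Lemma void_fn_cont (Y : topologicalType) : continuous (fun x : empty_space => @of_void Y x).
Proof. by move=> x; case: x. Qed.

Definition emp_arr (Y : topologicalType) : arr := @Arr empty_space Y _ (@void_fn_cont Y).

Lemma emp_arr_rr (Y : topologicalType) : rorth (lorth (single iota_arr)) (emp_arr Y).
Proof.
move=> k hk t b ct cb e.
have ce : continuous (fun _ : cod k => (tt : point_space)) by move=> x; apply: cvg_cst.
have ee : fn iota_arr \o t = (fun _ : cod k => (tt : point_space)) \o fn k.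
  by apply: boolp.funext => x; case: (t x).
have [d [cd [dk _]]] := hk iota_arr erefl t (fun _ => (tt : point_space)) ct ce ee.
exists d; split => //; split => //.
by apply: boolp.funext => x; case: (d x).
Qed.

Theorem mainTheorem11 (g : arr) : lrr (single iota_arr) g <-> has_cont_section g.
Proof.
split.
- move=> H.
  have [d [cd [_ gd]]] := H (emp_arr (cod g)) (@emp_arr_rr _)
    (fun x : empty_space => @of_void (dom g) x) id (@void_fn_cont _) (fun x => @cvg_id _ _)
    (boolp.funext (fun x : empty_space => match x with end)).
  by exists d.
- move=> [s [cs gs]] f hf t b ct cb e.
  have [[a0] | na] := boolp.pselect (inhabited (dom f)).
  + have hl : lorth (single iota_arr) f.
      move=> h -> t' b' ct' cb' e'.
      by case: (t' a0).
    have [r [cr [rf fr]]] := hf f hl id id (fun x => @cvg_id _ _) (fun x => @cvg_id _ _) erefl.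
    exists (t \o r); split; first by move=> x; apply: continuous_comp; [exact: cr | exact: ct].
    split.
    * by rewrite -compA rf.
    * by rewrite compA e -compA fr.
  + exists (s \o b); split.
    * move=> x; apply: continuous_comp; [exact: cb | exact: cs].
    * split.
      - by apply: boolp.funext => a; case: na; constructor.
      - by rewrite compA gs.
Qed.
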